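(* Let $G\in M_n(R)$ be the matrix with $G_{i,i+n-2}=1$ for $i=1,2$, $G_{i,i-2}=x^2$ for $3\le i\le n$, and all other entries $0$, and let $\alpha$ be the automorphism $\alpha(\lambda)=G^{-1}\lambda G$ of $\Lambda$. Identify $\mathrm D_R\Lambda=\operatorname{Hom}_R(\Lambda,R)$ with $\{Y\in M_n(K(x)):\operatorname{tr}(Y\lambda)\in R\ \forall\lambda\in\Lambda\}$ via the trace pairing, so that the $\Lambda$-bimodule structure becomes matrix multiplication on both sides. Then $f:\Lambda\to\mathrm D_R\Lambda$, $\mu\mapsto\mu G^{-1}$, is an isomorphism of $\Lambda$-bimodules ${}_1\Lambda_\alpha\cong\mathrm D_R\Lambda$.
   Context: $K$ a field, $R=K[x]$, $n\ge3$. $\Lambda\subset M_n(K(x))$ is the $R$-order with $(i,j)$ entry $x^{c_{ij}}R$, $c_{ij}=0$ for $i\le j$ except $c_{1n}=-1$, $c_{ij}=1$ for $i=j+1$, $c_{ij}=2$ for $i\ge j+2$. For an algebra automorphism $\varsigma$ of $\Lambda$, ${}_1\Lambda_\varsigma$ denotes $\Lambda$ as a vector space with bimodule structure $a\cdot m\cdot b=am\varsigma(b)$. The bimodule $\operatorname{Hom}_R(\Lambda,R)$ has structure $(\lambda f\mu)(m)=f(\mu m\lambda)$. *)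

(* Defs.v *)
From HB Require Import structures.
From mathcomp Require Import all_boot all_order all_algebra.
From mathcomp Require Import fraction.
Set Implicit Arguments. Unset Strict Implicit. Unset Printing Implicit Defensive.
Import Order.TTheory GRing.Theory Num.Theory.
Local Open Scope ring_scope.

(* K(x) as the fraction field of R = K[x] *)
Definition FK (K : fieldType) := {fraction {poly K}}.
Definition toF (K : fieldType) (p : {poly K}) : FK K := @FracField.tofrac _ p.

Definition xF (K : fieldType) : FK K := toF 'X.

Definition inR (K : fieldType) (a : FK K) : Prop := exists p : {poly K}, a = toF p.

(* exponents c_ij, with 0-based indices: paper's (i,j) is our (i-1,j-1) *)
Definition cexp (n : nat) (i j : 'I_n) : int :=
  if (i <= j)%N then (if ((i == 0%N :> nat) && (j == n.-1 :> nat)) then (-1)%R else 0%R)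
  else if (i == j.+1 :> nat) then 1%R else 2%R.

Definition inLam (K : fieldType) (n : nat) (A : 'M[FK K]_n) : Prop :=
  forall i j : 'I_n, exists p : {poly K}, A i j = (xF K) ^ (cexp i j) * toF p.

(* the matrix G (0-based): G_{i,i+n-2}=1 for i=0,1; G_{i,i-2}=x^2 for i>=2 *)
Definition Gmat (K : fieldType) (n : nat) : 'M[FK K]_n :=
  \matrix_(i < n, j < n)
    if ((i < 2)%N && (j == (i + n - 2)%N :> nat)) then 1
    else if ((2 <= i)%N && ((j + 2)%N == i :> nat)) then (xF K) ^+ 2 else 0.

Definition alpha (K : fieldType) (n : nat) (A : 'M[FK K]_n) : 'M[FK K]_n :=
  invmx (Gmat K n) *m A *m Gmat K n.

Definition inDLam (K : fieldType) (n : nat) (Y : 'M[FK K]_n) : Prop :=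
  forall L : 'M[FK K]_n, inLam L -> inR (\tr (Y *m L)).

Definition fmap (K : fieldType) (n : nat) (M : 'M[FK K]_n) : 'M[FK K]_n :=
  M *m invmx (Gmat K n).

(* Main.v *)
Require Import Defs.
From HB Require Import structures.
From mathcomp Require Import all_boot all_order all_algebra.
From mathcomp Require Import fraction zify ring.
Import GRing.Theory.
Local Open Scope ring_scope.

Section S.
Variable n : nat.
Hypothesis hn : (3 <= n)%N.

Definition sv (j : nat) : nat := if (j + 2 < n)%N then (j + 2)%N else (j + 2 - n)%N.
Definition tv (i : nat) : nat := if (2 <= i)%N then (i - 2)%N else (i + n - 2)%N.
Lemma sv_lt (j : 'I_n) : (sv j < n)%N.
Proof. have := ltn_ord j; rewrite /sv; case: ifP; lia. Qed.
Lemma tv_lt (j : 'I_n) : (tv j < n)%N.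
Proof. have := ltn_ord j; rewrite /tv; case: ifP; lia. Qed.
Definition s (j : 'I_n) : 'I_n := Ordinal (sv_lt j).
Definition t (j : 'I_n) : 'I_n := Ordinal (tv_lt j).
Definition v (j : 'I_n) : int := if (j + 2 < n)%N then 2%R else 0%R.

Lemma I1 (i k : 'I_n) : (cexp i k + cexp (s k) i = v k)%R.
Proof.
have := ltn_ord i; have := ltn_ord k.
rewrite /cexp /v /s /sv /=.
do ! (case: ifP => /=); try done; lia.
Qed.
Lemma I2 (i j : 'I_n) : (cexp (s i) (s j) + v j - v i = cexp i j)%R.
Proof.
have := ltn_ord i; have := ltn_ord j.
rewrite /cexp /v /s /sv /=.
do ! (case: ifP => /=); try done; lia.
Qed.
Variable K : fieldType.
Local Notation F := (FK K).
Local Notation x := (xF K).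
Lemma x_neq0 : x != 0.
Proof. by rewrite /xF /toF tofrac_eq0 polyX_eq0. Qed.
Definition d (j : 'I_n) : F := x ^ v j.
Lemma d_neq0 j : d j != 0.
Proof. by rewrite /d expfz_eq0 negb_and x_neq0 orbT. Qed.

Lemma st (i : 'I_n) : s (t i) = i.
Proof. apply: val_inj; have := ltn_ord i; rewrite /= /sv /tv; case: ifP => /=; case: ifP; lia. Qed.
Lemma ts (i : 'I_n) : t (s i) = i.
Proof. apply: val_inj; have := ltn_ord i; rewrite /= /sv /tv; case: ifP => /=; case: ifP; lia. Qed.
Lemma eq_s (i k : 'I_n) : (i == s k) = (k == t i).
Proof. apply/eqP/eqP => ->; by rewrite ?ts ?st. Qed.

Lemma GE (i j : 'I_n) : Gmat K n i j = if i == s j then d j else 0.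
Proof.
rewrite /Gmat mxE /d /v.
have := ltn_ord i; have := ltn_ord j.
case: (eqVneq i (s j)) => [->|]; rewrite /s /sv /=.
  case: ifP => /= h1 h2 h3.
  - have -> : ((j + 2 < 2)%N = false) by lia.
    by rewrite /= leq_addl eqxx.
  - have -> : ((j + 2 - n < 2)%N) by lia.
    have -> : (j == j + 2 - n + n - 2 :> nat)%N by apply/eqP; lia.
    by [].
move=> hne h1 h2.
case: ifP => [/andP [a /eqP b]|_].
  exfalso; move: hne => /eqP; apply; apply: val_inj; rewrite /= /sv; case: ifP; lia.
case: ifP => [/andP [a /eqP b]|//].
exfalso; move: hne => /eqP; apply; apply: val_inj; rewrite /= /sv; case: ifP; lia.
Qed.
Local Notation G := (Gmat K n).
Definition Gi : 'M[F]_n := \matrix_(i, j) if j == s i then (d i)^-1 else 0.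

Lemma mulmxG (A : 'M[F]_n) i j : (A *m G) i j = A i (s j) * d j.
Proof.
rewrite mxE (bigD1 (s j)) //= GE eqxx big1 ?addr0 // => k /negbTE nk.
by rewrite GE nk mulr0.
Qed.
Lemma mulGmx (A : 'M[F]_n) i j : (G *m A) i j = d (t i) * A (t i) j.
Proof.
rewrite mxE (bigD1 (t i)) //= GE eq_s eqxx big1 ?addr0 // => k /negbTE nk.
by rewrite GE eq_s nk mul0r.
Qed.
Lemma mulmxGi (A : 'M[F]_n) i j : (A *m Gi) i j = A i (t j) * (d (t j))^-1.
Proof.
rewrite mxE (bigD1 (t j)) //= mxE st eqxx big1 ?addr0 // => k /negbTE nk.
by rewrite mxE eq_s nk mulr0.
Qed.
Lemma mulGimx (A : 'M[F]_n) i j : (Gi *m A) i j = (d i)^-1 * A (s i) j.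
Proof.
rewrite mxE (bigD1 (s i)) //= mxE eqxx big1 ?addr0 // => k /negbTE nk.
by rewrite mxE nk mul0r.
Qed.
Lemma GGi : G *m Gi = 1%:M.
Proof.
apply/matrixP => i j; rewrite mulGmx !mxE st (eq_sym i).
by case: (j =P i) => _; rewrite ?mulfV ?d_neq0 ?mulr0.
Qed.
Lemma Gunit : G \in unitmx.
Proof. exact: (proj1 (mulmx1_unit GGi)). Qed.
Lemma invG : invmx G = Gi.
Proof. by rewrite -[Gi]mul1mx -(mulVmx Gunit) -mulmxA GGi mulmx1. Qed.
Lemma GiG : Gi *m G = 1%:M.
Proof. by rewrite -invG mulVmx ?Gunit. Qed.
Lemma xM (a b : int) : x ^ a * x ^ b = x ^ (a + b).
Proof. by rewrite expfzDr ?x_neq0. Qed.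

Lemma inR_sum (I : finType) (f : I -> F) : (forall i, inR (f i)) -> inR (\sum_i f i).
Proof.
move=> H; apply: (big_ind (fun z => inR z)) => //.
  by exists 0; rewrite /toF tofrac0.
by move=> a b [p ->] [q ->]; exists (p + q); rewrite /toF tofracD.
Qed.

Lemma alpha_in (L : 'M[F]_n) : inLam L -> inLam (alpha L).
Proof.
move=> HL i j; rewrite /alpha invG mulmxG mulGimx.
have [p Hp] := HL (s i) (s j); exists p; rewrite Hp -(I2 i j) /d.
rewrite invr_expz -!xM; set a := x ^ _; set b := x ^ _; set c := x ^ _.
ring. Qed.

Lemma alpha_inv_in (L : 'M[F]_n) : inLam L -> inLam (G *m L *m Gi).
Proof.
move=> HL i j; rewrite mulmxGi mulGmx.
have [p Hp] := HL (t i) (t j); exists p; rewrite Hp /d.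
have -> : cexp i j = v (t i) + cexp (t i) (t j) - v (t j).
  by rewrite -(I2 (t i) (t j)) !st; lia.
rewrite invr_expz -!xM; set a := x ^ _; set b := x ^ _; set c := x ^ _.
ring.
Qed.

Lemma fmap_in (M : 'M[F]_n) : inLam M -> inDLam (fmap M).
Proof.
move=> HM L HL; rewrite /fmap invG /mxtrace.
apply: inR_sum => a; rewrite mxE; apply: inR_sum => b.
rewrite mulmxGi.
have [p Hp] := HM a (t b); have [q Hq] := HL b a.
exists (p * q); rewrite Hp Hq /d /toF tofracM.
have e : cexp a (t b) + - v (t b) + cexp b a = 0.
  by rewrite -(I1 a (t b)) st; lia.
rewrite invr_expz.
transitivity (x ^ (cexp a (t b) + - v (t b) + cexp b a) * ((FracField.tofrac p) * (FracField.tofrac q))); last by rewrite e expr0z mul1r.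
rewrite -!xM; set a1 := x ^ _; set b1 := x ^ _; set c1 := x ^ _.
ring.
Qed.
Lemma fmap_onto (Y : 'M[F]_n) : inDLam Y -> inLam (Y *m G).
Proof.
move=> HY a k; rewrite mulmxG.
set b := s k; set c := cexp b a.
pose L : 'M[F]_n := \matrix_(i, j) if (i == b) && (j == a) then x ^ c else 0.
have HL : inLam L.
  move=> i j; rewrite mxE; case: andP => [[/eqP -> /eqP ->]|_].
    by exists 1; rewrite /toF tofrac1 mulr1.
  by exists 0; rewrite /toF tofrac0 mulr0.
have [p Hp] := HY L HL.
have tr : \tr (Y *m L) = Y a b * x ^ c.
  rewrite /mxtrace (bigD1 a) //= big1 ?addr0.
    rewrite mxE (bigD1 b) //= mxE !eqxx big1 ?addr0 // => j /negbTE nj.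
    by rewrite mxE nj mulr0.
  move=> i /negbTE ni; rewrite mxE big1 // => j _.
  by rewrite mxE ni andbF mulr0.
exists p; rewrite /d.
have -> : Y a b = x ^ (- c) * toF p.
  by rewrite -Hp tr mulrCA xM addNr expr0z mulr1.
have -> : cexp a k = - c + v k by rewrite /c /b -(I1 a k); lia.
by rewrite -xM mulrAC.
Qed.
End S.

Theorem proposition3p20 (K : fieldType) (n : nat) (hn : (3 <= n)%N) :
  (* G is invertible and alpha is an automorphism of Lambda *)
  (Gmat K n \in unitmx /\
   (forall L : 'M[FK K]_n, inLam L -> inLam (alpha L)) /\
   (forall L : 'M[FK K]_n, inLam L -> exists2 L' : 'M[FK K]_n, inLam L' & alpha L' = L)) /\
  (* f maps Lambda into D_R Lambda, bijectively *)
  (forall M : 'M[FK K]_n, inLam M -> inDLam (fmap M)) /\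
  (forall Y : 'M[FK K]_n, inDLam Y -> exists2 M : 'M[FK K]_n, inLam M & fmap M = Y) /\
  (forall M N : 'M[FK K]_n, inLam M -> inLam N -> fmap M = fmap N -> M = N) /\
  (* f is a bimodule map 1_Lambda_alpha -> D_R Lambda *)
  (forall a b M N : 'M[FK K]_n, inLam a -> inLam b -> inLam M -> inLam N ->
     fmap (M + N) = fmap M + fmap N /\
     fmap (a *m M *m alpha b) = a *m fmap M *m b).
Proof.
have GGi' := @GGi n hn K; have GiG' := @GiG n hn K; have invG' := @invG n hn K.
split; [split; [exact: Gunit|split]|split; [|split; [|split]]].
- exact: alpha_in.
- move=> L HL; exists (Gmat K n *m L *m @Gi n hn K); first exact: alpha_inv_in.
  by rewrite /alpha invG' !mulmxA GiG' mul1mx -mulmxA GiG' mulmx1.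
- exact: fmap_in.
- move=> Y HY; exists (Y *m Gmat K n); first exact: fmap_onto.
  by rewrite /fmap invG' -mulmxA GGi' mulmx1.
- move=> M N _ _; rewrite /fmap invG' => E.
  by rewrite -[M]mulmx1 -[N]mulmx1 -GiG' !mulmxA E.
- move=> a b M N _ _ _ _; split; first by rewrite /fmap mulmxDl.
  by rewrite /fmap /alpha invG' !mulmxA -[a *m M *m @Gi n hn K *m b *m Gmat K n *m @Gi n hn K]mulmxA GGi' mulmx1.
Qed.
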